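(* Let $A=\{a_1,\dots,a_k\}$ be a finite nonempty set and $M\le A^A$ a monoid. The following are equivalent: (i) $M$ is u-closed (equivalently, $M^{*}$ is a clone); (ii) $M^{*}=\mathrm{Pol}\,\Gamma_M$; (iii) $C\subseteq M$ and for every binary $f\in M^{*}$ the unary map $x\mapsto f(x,x)$ belongs to $M$; (iv) $\Gamma_M$ is a generalized quasiorder.
   Context: $C$ is the set of all constant unary maps on $A$. $\Gamma_M:=\{(g a_1,\dots,g a_k)\mid g\in M\}\subseteq A^k$. $\mathrm{Pol}\,\rho$ is the set of all finitary operations on $A$ preserving $\rho$ (componentwise application to tuples of $\rho$ gives a tuple of $\rho$). A translation of an $n$-ary $f$ is a unary map $x\mapsto f(b_1,\dots,b_{i-1},x,b_{i+1},\dots,b_n)$ with fixed $b_j\in A$; $\mathrm{trl}(f)$ is the set of translations of $f$ ($\{f\}$ if $f$ is unary); $M^*:=\{f\mid\mathrm{trl}(f)\subseteq M\}$. The u-closure $\overline M$ is the intersection of all monoids $N$ with $M\subseteq N\le A^A$ such that $N^*$ is a clone; $M$ is u-closed if $\overline M=M$. A relation $\rho\subseteq A^m$ is a generalized quasiorder if it is reflexive and, for every $m\times m$-matrix over $A$ whose rows and columns all lie in $\rho$, its diagonal lies in $\rho$. *)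

(* Defs.v *)
From mathcomp Require Import all_boot.
Set Implicit Arguments. Unset Strict Implicit. Unset Printing Implicit Defensive.

Section Defs.
Variable A : finType.

(** An n-ary operation on A: a (finite) function from n-tuples, i.e.
    maps 'I_n -> A, to A.  Finitary operations have arity n >= 1; an
    operation of arity n.+1 is an element of [Op n.+1]. *)
Definition Op (n : nat) := {ffun {ffun 'I_n -> A} -> A}.

Definition OpSet := forall n : nat, Op n.+1 -> Prop.

Definition is_monoid (M : {set {ffun A -> A}}) : Prop :=
  [ffun x => x] \in M /\
  (forall g h, g \in M -> h \in M -> [ffun x => g (h x)] \in M).

Definition translation n (f : Op n) (i : 'I_n) (b : {ffun 'I_n -> A})
  : {ffun A -> A} :=
  [ffun x => f [ffun j => if j == i then x else b j]].

Definition trl_sub n (f : Op n) (M : {set {ffun A -> A}}) : Prop :=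
  forall i b, translation f i b \in M.

Definition Mstar (M : {set {ffun A -> A}}) : OpSet :=
  fun n f => trl_sub f M.

Definition proj n (i : 'I_n) : Op n := [ffun x : {ffun 'I_n -> A} => x i].
Definition compose m n (f : Op m) (gs : 'I_m -> Op n) : Op n :=
  [ffun x => f [ffun j => gs j x]].

Definition is_clone (F : OpSet) : Prop :=
  (forall n (i : 'I_n.+1), F n (proj i)) /\
  (forall m n (f : Op m.+1) (gs : 'I_m.+1 -> Op n.+1),
      F m f -> (forall j, F n (gs j)) -> F n (compose f gs)).

Definition uclosure (M : {set {ffun A -> A}}) (g : {ffun A -> A}) : Prop :=
  forall N : {set {ffun A -> A}},
    is_monoid N -> M \subset N -> is_clone (Mstar N) -> g \in N.

Definition u_closed (M : {set {ffun A -> A}}) : Prop :=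
  forall g, uclosure M g <-> g \in M.

Definition Rel (m : nat) := {ffun 'I_m -> A} -> Prop.

Definition preserves n m (f : Op n) (rho : Rel m) : Prop :=
  forall r : 'I_n -> {ffun 'I_m -> A},
    (forall j, rho (r j)) -> rho [ffun i => f [ffun j => r j i]].

Definition Pol m (rho : Rel m) : OpSet := fun n f => preserves f rho.

Definition a_ (i : 'I_#|A|) : A := enum_val i.

Definition Gamma (M : {set {ffun A -> A}}) : Rel #|A| :=
  fun t => exists2 g, g \in M & forall i, t i = g (a_ i).

Definition C_sub (M : {set {ffun A -> A}}) : Prop :=
  forall c : A, [ffun _ : A => c] \in M.

Definition reflexive_rel m (rho : Rel m) : Prop :=
  forall x : A, rho [ffun _ => x].

Definition gen_quasiorder m (rho : Rel m) : Prop :=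
  reflexive_rel rho /\
  forall X : 'I_m -> 'I_m -> A,
    (forall i, rho [ffun j => X i j]) ->
    (forall j, rho [ffun i => X i j]) ->
    rho [ffun i => X i i].

End Defs.

(* Main.v *)
Require Import Defs.
From mathcomp Require Import all_boot.
Set Implicit Arguments. Unset Strict Implicit. Unset Printing Implicit Defensive.

Section S.
Variables (A : finType) (M : {set {ffun A -> A}}) (HM : is_monoid M).

Local Notation aa := (@a_ A).
Definition DiagProp := forall phi : A -> A -> A,
  (forall x, [ffun y => phi x y] \in M) -> (forall y, [ffun x => phi x y] \in M) ->
  [ffun x => phi x x] \in M.
Definition QQ := C_sub M /\ DiagProp.

Definition tup (g : {ffun A -> A}) : {ffun 'I_#|A| -> A} := [ffun i => g (aa i)].
Definition untup (t : {ffun 'I_#|A| -> A}) : {ffun A -> A} := [ffun x => t (enum_rank x)].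

Lemma a_rank x : aa (enum_rank x) = x.
Proof. exact: enum_rankK. Qed.
Lemma rank_a i : enum_rank (aa i) = i.
Proof. exact: enum_valK. Qed.

Lemma id_mem : [ffun x => x] \in M.
Proof. exact: HM.1. Qed.
Lemma comp_mem g h : g \in M -> h \in M -> [ffun x => g (h x)] \in M.
Proof. exact: HM.2. Qed.

Lemma mem_of_elt g : (A -> g \in M) -> g \in M.
Proof.
case: (pickP (@predT A)) => [a _ H|Hn _]; first exact: H.
have -> : g = [ffun x => x] by apply/ffunP=> x; have := Hn x.
exact: id_mem.
Qed.

Lemma Gamma_mem t : Gamma M t -> untup t \in M.
Proof.
case=> g gM tg; have -> : untup t = g by apply/ffunP=> x; rewrite ffunE tg a_rank.
exact: gM.
Qed.

Lemma Gamma_tup g : g \in M -> Gamma M (tup g).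
Proof. by move=> gM; exists g => // i; rewrite ffunE. Qed.

Lemma untup_tup g : untup (tup g) = g.
Proof. by apply/ffunP=> x; rewrite !ffunE a_rank. Qed.

Definition fbin (phi : A -> A -> A) : Op A 2 := [ffun v : {ffun 'I_2 -> A} => phi (v ord0) (v ord_max)].

Lemma fbin_Mstar phi : (forall x, [ffun y => phi x y] \in M) ->
  (forall y, [ffun x => phi x y] \in M) -> Mstar M (fbin phi).
Proof.
move=> Hx Hy i b; case: i => [[|[|i]] Hi] //.
  have -> : translation (fbin phi) (Ordinal Hi) b = [ffun x => phi x (b ord_max)].
    by apply/ffunP=> x; rewrite !ffunE.
  exact: Hy.
have -> : translation (fbin phi) (Ordinal Hi) b = [ffun y => phi (b ord0) y].
  by apply/ffunP=> x; rewrite !ffunE.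
exact: Hx.
Qed.

Lemma fbin_diag phi : [ffun x => fbin phi [ffun _ => x]] = [ffun x => phi x x].
Proof. by apply/ffunP=> x; rewrite !ffunE. Qed.

Lemma const_from_proj : Mstar M (@proj A 2 ord0) -> C_sub M.
Proof.
move=> H c; have := H ord_max [ffun _ => c].
have -> // : translation (@proj A 2 ord0) ord_max [ffun _ => c] = [ffun _ => c].
by apply/ffunP=> x; rewrite !ffunE.
Qed.

Lemma KL : QQ -> forall n (f : Op A n.+1), Mstar M f ->
  forall h : 'I_n.+1 -> {ffun A -> A}, (forall j, h j \in M) ->
  [ffun x => f [ffun j => h j x]] \in M.
Proof.
case=> HC HD n f Hf h Hh; apply: mem_of_elt => a0.
suff H : forall k, k <= n.+1 -> forall b : {ffun 'I_n.+1 -> A},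
    [ffun x => f [ffun j : 'I_n.+1 => if j < k then h j x else b j]] \in M.
  have := H n.+1 (leqnn _) [ffun _ => a0].
  have -> // : [ffun x => f [ffun j : 'I_n.+1 => if j < n.+1 then h j x else [ffun _ => a0] j]]
      = [ffun x => f [ffun j => h j x]].
  apply/ffunP=> x; rewrite !ffunE; congr (f _); apply/ffunP=> j; by rewrite !ffunE ltn_ord.
elim=> [|k IH] Hk b.
  have -> : [ffun x => f [ffun j : 'I_n.+1 => if j < 0 then h j x else b j]] = [ffun _ => f b].
    apply/ffunP=> x; rewrite !ffunE; congr (f _); apply/ffunP=> j; by rewrite !ffunE.
  exact: HC.
pose p := Ordinal Hk.
pose phi x y := f [ffun j : 'I_n.+1 => if j < k then h j x else if (j : nat) == k then h j y else b j].
have -> : [ffun x => f [ffun j : 'I_n.+1 => if j < k.+1 then h j x else b j]] = [ffun x => phi x x].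
  apply/ffunP=> x; rewrite !ffunE; congr (f _); apply/ffunP=> j; rewrite !ffunE.
  by rewrite ltnS leq_eqVlt; case: ltngtP.
apply: HD => [x|y].
  pose b' := [ffun j : 'I_n.+1 => if j < k then h j x else b j].
  have -> : [ffun y => phi x y] = [ffun y => translation f p b' (h p y)].
    apply/ffunP=> y; rewrite !ffunE; congr (f _); apply/ffunP=> j; rewrite !ffunE.
    case: (eqVneq j p) => [->|njp]; first by rewrite /= ltnn eqxx.
    have nj : (j : nat) != k.
      by apply: contra njp => /eqP e; apply/eqP/val_inj.
    by rewrite (negbTE nj).
  exact: comp_mem (Hf p b') (Hh p).
pose b'' := [ffun j : 'I_n.+1 => if (j : nat) == k then h j y else b j].
have -> : [ffun x => phi x y] = [ffun x => f [ffun j : 'I_n.+1 => if j < k then h j x else b'' j]].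
  apply/ffunP=> x; rewrite !ffunE; congr (f _); apply/ffunP=> j; by rewrite !ffunE.
exact: IH (ltnW Hk) b''.
Qed.

Lemma L1 : u_closed M <-> is_clone (Mstar M).
Proof.
have sub (N : {set {ffun A -> A}}) n (f : Op A n.+1) : M \subset N -> Mstar M f -> Mstar N f.
  by move=> /subsetP sMN Hf i b; apply: sMN; apply: Hf.
split.
  move=> Hu; split.
    move=> n i i' b; apply/Hu => N _ sMN [Hp _]; exact: Hp.
  move=> m n f gs Hf Hg i b; apply/Hu => N _ sMN [_ Hc].
  apply: Hc; first exact: sub sMN Hf.
  by move=> j; apply: sub sMN (Hg j).
move=> Hcl g; split.
  by move=> H; apply: H => //; exact: subxx.
by move=> gM N _ /subsetP sMN _; apply: sMN.
Qed.

Lemma L2 : is_clone (Mstar M) -> QQ.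
Proof.
case=> Hp Hc; split; first exact: const_from_proj (Hp 1 ord0).
move=> phi Hx Hy; apply: mem_of_elt => a0.
have := Hc 1 0 (fbin phi) (fun _ => proj A (ord0 : 'I_1)) (fbin_Mstar Hx Hy) (fun _ => Hp 0 ord0)
  ord0 [ffun _ => a0].
have -> // : translation (compose (fbin phi) (fun _ => proj A (ord0 : 'I_1))) ord0 [ffun _ => a0]
   = [ffun x => phi x x].
by apply/ffunP=> x; rewrite !ffunE eqxx.
Qed.

Lemma L3 : QQ -> is_clone (Mstar M).
Proof.
move=> Q; have [HC HD] := Q; split.
  move=> n i i' b; case: (eqVneq i i') => [<-|ne].
    have -> : translation (proj A i) i b = [ffun x => x].
      by apply/ffunP=> x; rewrite !ffunE eqxx.
    exact: id_mem.
  have -> : translation (proj A i) i' b = [ffun _ => b i].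
    by apply/ffunP=> x; rewrite !ffunE (negbTE ne).
  exact: HC.
move=> m n f gs Hf Hg i b.
have -> : translation (compose f gs) i b = [ffun x => f [ffun j => translation (gs j) i b x]].
  apply/ffunP=> x; rewrite !ffunE; congr (f _); apply/ffunP=> j; by rewrite !ffunE.
exact: KL Q _ f Hf _ (fun j => Hg j i b).
Qed.

Lemma L4 : QQ -> forall n (f : Op A n.+1), Mstar M f <-> Pol (Gamma M) f.
Proof.
move=> Q n f; have [HC HD] := Q; split.
  move=> Hf r Hr.
  have := KL Q Hf (fun j => Gamma_mem (Hr j)) => hM.
  exists [ffun x => f [ffun j => untup (r j) x]] => // i.
  rewrite !ffunE; congr (f _); apply/ffunP=> j; by rewrite !ffunE rank_a.
move=> Hf i b.
pose r j := tup (if j == i then [ffun x => x] else [ffun _ => b j]).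
have Hr j : Gamma M (r j).
  by apply: Gamma_tup; case: ifP => _; [exact: id_mem | exact: HC].
have := Gamma_mem (Hf r Hr).
have -> // : untup [ffun l => f [ffun j => r j l]] = translation f i b.
apply/ffunP=> x; rewrite !ffunE; congr (f _); apply/ffunP=> j; rewrite !ffunE.
by case: (j == i); rewrite !ffunE ?a_rank.
Qed.

Lemma L5 : (forall n (f : Op A n.+1), Mstar M f <-> Pol (Gamma M) f) -> QQ.
Proof.
move=> H; split.
  apply: const_from_proj; apply/H => r Hr.
  have -> // : [ffun i => @proj A 2 ord0 [ffun j => r j i]] = r ord0.
  by apply/ffunP=> i; rewrite !ffunE.
move=> phi Hx Hy.
have := (H 1 (fbin phi)).1 (fbin_Mstar Hx Hy) (fun _ => tup [ffun x => x])
  (fun _ => Gamma_tup id_mem) => /Gamma_mem.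
have -> // : untup [ffun i => fbin phi [ffun j => tup [ffun x => x] i]] = [ffun x => phi x x].
by apply/ffunP=> x; rewrite !ffunE a_rank.
Qed.

Lemma L6 : QQ <-> (C_sub M /\ (forall f : Op A 2, Mstar M f ->
            [ffun x => f [ffun _ => x]] \in M)).
Proof.
split.
  move=> Q; have [HC HD] := Q; split => // f Hf.
  have := KL Q Hf (fun _ => id_mem).
  have -> // : [ffun x => f [ffun j => [ffun x0 => x0] x]] = [ffun x => f [ffun _ => x]].
  apply/ffunP=> x; rewrite !ffunE; congr (f _); apply/ffunP=> j; by rewrite !ffunE.
case=> HC HD; split => // phi Hx Hy.
rewrite -fbin_diag; exact: HD (fbin_Mstar Hx Hy).
Qed.

Lemma L7 : QQ <-> gen_quasiorder (Gamma M).
Proof.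
split.
  case=> HC HD; split.
    by move=> x; exists [ffun _ => x] => // i; rewrite !ffunE.
  move=> X Hr Hc.
  pose phi x y := X (enum_rank x) (enum_rank y).
  have := HD phi.
  have Hx x : [ffun y => phi x y] \in M.
    have -> : [ffun y => phi x y] = untup [ffun j => X (enum_rank x) j].
      by apply/ffunP=> y; rewrite !ffunE.
    exact: Gamma_mem.
  have Hy y : [ffun x => phi x y] \in M.
    have -> : [ffun x => phi x y] = untup [ffun i => X i (enum_rank y)].
      by apply/ffunP=> x; rewrite !ffunE.
    exact: Gamma_mem.
  move=> /(_ Hx Hy) dM; exists [ffun x => phi x x] => // i.
  by rewrite !ffunE /phi rank_a.
case=> Hr Hm; split.
  move=> c; have := Gamma_mem (Hr c).
  have -> // : untup [ffun _ => c] = [ffun _ => c].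
  by apply/ffunP=> x; rewrite !ffunE.
move=> phi Hx Hy.
have := Hm (fun i j => phi (aa i) (aa j)).
case.
- by move=> i; exists [ffun y => phi (aa i) y] => // j; rewrite !ffunE.
- by move=> j; exists [ffun x => phi x (aa j)] => // i; rewrite !ffunE.
move=> g gM Hg.
have -> // : [ffun x => phi x x] = g.
apply/ffunP=> x; have := Hg (enum_rank x); rewrite !ffunE a_rank => -> //=.
Qed.

End S.

Theorem proposition3p9 (A : finType) (HA : 0 < #|A|)
    (M : {set {ffun A -> A}}) (HM : is_monoid M) :
  [<-> u_closed M;
       (forall n (f : Op A n.+1), Mstar M f <-> Pol (Gamma M) f);
       C_sub M /\
         (forall f : Op A 2, Mstar M f ->
            [ffun x => f [ffun _ => x]] \in M);
       gen_quasiorder (Gamma M)].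
Proof.
tfae.
- by move=> H; apply: (L4 HM); apply: (L2 HM); exact: (L1 HM).1 H.
- by move=> H; exact: (L6 HM).1 ((L5 HM) H).
- by move=> H; exact: (L7 M).1 ((L6 HM).2 H).
- by move=> H; apply: (L1 HM).2; apply: (L3 HM); exact: (L7 M).2 H.
Qed.
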